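(* Let $\mathcal R=(V,E)$ be the Rado graph, let $w\notin V$, and let $\mathcal R'$ be the graph with vertex set $V\cup\{w\}$ and edge set $E\cup\{\{w,x\}:x\in V\}$. Then $\mathcal R'$ is IH-homogeneous but not IE-homogeneous.
   Context: All graphs are undirected and loopless; subgraphs are induced. The Rado graph is the unique countable graph such that for all finite disjoint vertex sets $A,B$ there is a vertex adjacent to all of $A$ and to none of $B$. $G$ is IH-homogeneous (resp. IE-homogeneous) if every isomorphism between finite induced subgraphs of $G$ is the restriction of an endomorphism (resp. a surjective endomorphism) of $G$, where an endomorphism is a map $G\to G$ sending adjacent vertices to adjacent vertices. *)

(* Defs.v *)
From Stdlib Require Import List.
Import ListNotations.

Definition countable (V : Type) : Prop :=
  exists f : V -> nat, forall x y, f x = f y -> x = y.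

Definition is_graph {V : Type} (adj : V -> V -> Prop) : Prop :=
  (forall x y, adj x y -> adj y x) /\ (forall x, ~ adj x x).

(* Extension property characterizing the Rado graph (among countable graphs):
   for all finite disjoint vertex sets A, B there is a vertex adjacent to all
   of A and to none of B. *)
Definition rado_property {V : Type} (adj : V -> V -> Prop) : Prop :=
  forall A B : list V,
    (forall x, In x A -> ~ In x B) ->
    exists v, (forall a, In a A -> adj v a) /\ (forall b, In b B -> ~ adj v b).

Definition is_rado_graph (V : Type) (adj : V -> V -> Prop) : Prop :=
  countable V /\ is_graph adj /\ rado_property adj.

Definition endomorphism {T : Type} (adj : T -> T -> Prop) (g : T -> T) : Prop :=
  forall x y, adj x y -> adj (g x) (g y).

Definition finite_partial_iso {T : Type} (adj : T -> T -> Prop)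
    (A : list T) (f : T -> T) : Prop :=
  (forall x y, In x A -> In y A -> f x = f y -> x = y) /\
  (forall x y, In x A -> In y A -> (adj x y <-> adj (f x) (f y))).

Definition IH_homogeneous {T : Type} (adj : T -> T -> Prop) : Prop :=
  forall (A : list T) (f : T -> T), finite_partial_iso adj A f ->
    exists g : T -> T, endomorphism adj g /\ (forall x, In x A -> g x = f x).

Definition IE_homogeneous {T : Type} (adj : T -> T -> Prop) : Prop :=
  forall (A : list T) (f : T -> T), finite_partial_iso adj A f ->
    exists g : T -> T, endomorphism adj g /\ (forall y, exists x, g x = y) /\
      (forall x, In x A -> g x = f x).

(* R' : add a new vertex w (= None) adjacent to every vertex of V. *)
Definition add_universal {V : Type} (adj : V -> V -> Prop) :
    option V -> option V -> Prop :=
  fun x y => match x, y with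
             | Some a, Some b => adj a b
             | None, Some _ => True
             | Some _, None => True
             | None, None => False
             end.

(* Main.v *)
Require Import Defs.
From Stdlib Require Import List Classical ClassicalEpsilon Lia Arith PeanoNat.
Import ListNotations.

Lemma rado_pick {V} (E : V -> V -> Prop) (HR : rado_property E) (l : list V) :
  {v | forall a, In a l -> E v a}.
Proof.
  apply constructive_indefinite_description.
  destruct (HR l []) as [v [Hv _]]. { intros x _ []. }
  exists v; exact Hv.
Qed.

Definition pick {V} (E : V -> V -> Prop) (HR : rado_property E) l :=
  proj1_sig (rado_pick E HR l).

Lemma pick_spec {V} (E : V -> V -> Prop) (HR : rado_property E) l :
  forall a, In a l -> E (pick E HR l) a.
Proof. unfold pick. destruct (rado_pick E HR l); simpl; auto. Qed.

Definition findcode {V} (code : V -> nat) (m : nat) : option V :=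
  match excluded_middle_informative (exists x, code x = m) with
  | left e => Some (proj1_sig (constructive_indefinite_description _ e))
  | right _ => None end.

Lemma findcode_some {V} (code : V -> nat) m x : findcode code m = Some x -> code x = m.
Proof.
  unfold findcode. destruct excluded_middle_informative as [e|]; [|discriminate].
  intros Hx; inversion Hx; subst.
  destruct (constructive_indefinite_description _ e); simpl; auto.
Qed.

Lemma findcode_code {V} (code : V -> nat) x :
  (forall x y, code x = code y -> x = y) -> findcode code (code x) = Some x.
Proof.
  intros Hi. unfold findcode. destruct excluded_middle_informative as [e|n].
  - f_equal. destruct (constructive_indefinite_description _ e); simpl; auto.
  - exfalso; apply n; eauto.
Qed.

Definition nbrs {V} (E : V->V->Prop) (x : V) (l : list (V*V)) : list V :=
  flat_map (fun p => if excluded_middle_informative (E x (fst p)) then [snd p] else []) l.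

Lemma nbrs_in {V} (E : V->V->Prop) x y y' l :
  In (y,y') l -> E x y -> In y' (nbrs E x l).
Proof.
  intros Hin He. unfold nbrs. apply in_flat_map. exists (y,y'). split; auto.
  simpl. destruct excluded_middle_informative; [left; auto | contradiction].
Qed.

Fixpoint pairs {V} E HR (code : V -> nat) (L : list V) (n : nat) : list (V*V) :=
  match n with 0 => [] | S m =>
    match findcode code m with
    | Some x => (x, pick E HR (L ++ nbrs E x (pairs E HR code L m))) :: pairs E HR code L m
    | None => pairs E HR code L m end end.

Definition hmap {V} E HR (code : V -> nat) L x :=
  pick E HR (L ++ nbrs E x (pairs E HR code L (code x))).

Lemma pairs_complete {V} E HR (code : V -> nat) L :
  (forall x y, code x = code y -> x = y) ->
  forall n y, code y < n -> In (y, hmap E HR code L y) (pairs E HR code L n).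
Proof.
  intros Hi. induction n; intros y Hy; [lia|].
  destruct (Nat.eq_dec (code y) n) as [e|e].
  - subst n. simpl. rewrite findcode_code by exact Hi. left. reflexivity.
  - simpl. assert (code y < n) by lia.
    destruct (findcode code n); [right|]; auto.
Qed.

Lemma hmap_hom {V} (E : V -> V -> Prop) HR code L :
  is_graph E -> (forall x y, code x = code y -> x = y) ->
  forall x y, E x y -> E (hmap E HR code L x) (hmap E HR code L y).
Proof.
  intros [Hs Hl] Hi.
  assert (K : forall x y, E x y -> code y < code x ->
            E (hmap E HR code L x) (hmap E HR code L y)).
  { intros x y Hxy Hlt. unfold hmap at 1. apply pick_spec. apply in_or_app; right.
    eapply nbrs_in; [|exact Hxy]. apply pairs_complete; auto. }
  intros x y Hxy.
  destruct (Nat.lt_total (code x) (code y)) as [h|[h|h]].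
  - apply Hs. apply K; auto.
  - apply Hi in h; subst. exfalso; eapply Hl; eauto.
  - apply K; auto.
Qed.

Lemma hmap_L {V} (E : V -> V -> Prop) HR code L x l :
  In l L -> E (hmap E HR code L x) l.
Proof. intros. unfold hmap. apply pick_spec. apply in_or_app; auto. Qed.

Lemma au_sym {V} (E : V -> V -> Prop) : is_graph E ->
  forall x y, add_universal E x y -> add_universal E y x.
Proof. intros [Hs _] [x|] [y|]; simpl; auto. Qed.

Definition somes {V} (l : list (option V)) : list V :=
  flat_map (fun o => match o with Some s => [s] | None => [] end) l.

Lemma somes_in {V} (l : list (option V)) s : In (Some s) l -> In s (somes l).
Proof. intros H. unfold somes. apply in_flat_map. exists (Some s); simpl; auto. Qed.

Theorem mainTheorem20 (V : Type) (E : V -> V -> Prop) :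
  is_rado_graph V E ->
  IH_homogeneous (add_universal E) /\ ~ IE_homogeneous (add_universal E).
Proof.
  intros [[code Hi] [HG HR]].
  pose proof HG as [Hs Hl].
  split.
  - intros A f [Hinj Hadj].
    set (SV := somes (map f A)).
    set (u := pick E HR SV).
    assert (Hu : forall s, In s SV -> E u s) by apply pick_spec.
    set (h := hmap E HR code (u :: SV)).
    assert (Hh : forall x y, E x y -> E (h x) (h y)) by (apply hmap_hom; auto).
    assert (HhL : forall x l, In l (u :: SV) -> E (h x) l) by (intros; apply hmap_L; auto).
    assert (Q : forall a v, In a A -> add_universal E (f a) (Some (h v))).
    { intros a v Ha. destruct (f a) as [s|] eqn:Hf; simpl; auto.
      apply Hs, HhL. right. apply somes_in. rewrite <- Hf. apply in_map; auto. }
    exists (fun o => match o with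
      | None => if excluded_middle_informative (In None A) then f None else Some u
      | Some x => if excluded_middle_informative (In (Some x) A) then f (Some x) else Some (h x) end).
    split.
    + assert (P : forall y, add_universal E
         (if excluded_middle_informative (In None A) then f None else Some u)
         (if excluded_middle_informative (In (Some y) A) then f (Some y) else Some (h y))).
      { intro y. destruct (excluded_middle_informative (In None A)) as [a|a];
        destruct (excluded_middle_informative (In (Some y) A)) as [b|b].
        - apply (proj1 (Hadj None (Some y) a b)); exact I.
        - apply Q; auto.
        - apply au_sym; auto. destruct (f (Some y)) as [s|] eqn:Hf; simpl; auto.
          apply Hs, Hu. apply somes_in. rewrite <- Hf. apply in_map; auto.
        - simpl. apply Hs, HhL. left; auto. }
      intros [x|] [y|] Hxy; simpl in Hxy.
      * destruct (excluded_middle_informative (In (Some x) A)) as [a|a];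
        destruct (excluded_middle_informative (In (Some y) A)) as [b|b].
        -- apply (proj1 (Hadj _ _ a b)); exact Hxy.
        -- apply Q; auto.
        -- apply (au_sym E HG). apply Q; auto.
        -- simpl. auto.
      * apply (au_sym E HG). apply P.
      * apply P.
      * contradiction.
    + intros [x|] Hx; destruct excluded_middle_informative; tauto.
  - intros HIE.
    destruct (HR [] []) as [v0 _]. { intros x []. }
    destruct (HR [v0] []) as [w1 [Hw1 _]]. { intros x _ []. }
    assert (E w1 v0) by (apply Hw1; simpl; auto).
    destruct (HR [] [v0; w1]) as [z [_ Hz]]. { intros x []. }
    destruct (HIE [None] (fun _ => Some v0)) as [g [Hg [Hsur Hext]]].
    { split.
      - intros x y [<-|[]] [<-|[]] _; auto.
      - intros x y [<-|[]] [<-|[]]; simpl. split; [tauto|]. apply Hl. }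
    destruct (Hsur (Some z)) as [[y|] Hy].
    + assert (add_universal E (g (Some y)) (g None)) by (apply Hg; simpl; auto).
      rewrite Hy, (Hext None) in H0 by (simpl; auto). simpl in H0.
      apply (Hz v0); simpl; auto.
    + rewrite Hext in Hy by (simpl; auto). inversion Hy; subst.
      apply (Hz w1); simpl; auto.
Qed.
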